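(* The sequential fan $S_\omega$ is not $L$-selective.
   Context: For spaces $Y$, $X$, a map $\varphi:Y\to\mathcal P(X)\setminus\{\emptyset\}$ is lower semicontinuous (l.s.c.) if $\{y:\varphi(y)\cap U\neq\emptyset\}$ is open in $Y$ for every open $U\subseteq X$; a selection is a map $f:Y\to X$ with $f(y)\in\varphi(y)$ for all $y$. $X$ is $Y$-selective if every l.s.c. map from $Y$ to the nonempty closed subsets of $X$ has a continuous selection; $L$-selective means $(\omega+1)$-selective, with $\omega+1$ carrying the order topology. The sequential fan $S_\omega$ is the quotient of the topological sum of countably many convergent sequences (with limits) obtained by identifying all limit points. *)

(* Defs.v *)
Definition closed_in {X : Type} (openX : (X -> Prop) -> Prop) (A : X -> Prop) : Prop :=
  openX (fun x => ~ A x).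

Definition continuous_map {Y X : Type} (openY : (Y -> Prop) -> Prop)
  (openX : (X -> Prop) -> Prop) (f : Y -> X) : Prop :=
  forall U, openX U -> openY (fun y => U (f y)).

(** phi : Y -> P(X) (represented as a relation); lower semicontinuity:
    {y | phi y meets U} is open for every open U. *)
Definition lsc {Y X : Type} (openY : (Y -> Prop) -> Prop)
  (openX : (X -> Prop) -> Prop) (phi : Y -> X -> Prop) : Prop :=
  forall U, openX U -> openY (fun y => exists x, phi y x /\ U x).

Definition selective {Y X : Type} (openY : (Y -> Prop) -> Prop)
  (openX : (X -> Prop) -> Prop) : Prop :=
  forall phi : Y -> X -> Prop,
    (forall y, exists x, phi y x) ->
    (forall y, closed_in openX (phi y)) ->
    lsc openY openX phi ->
    exists f : Y -> X, continuous_map openY openX f /\ forall y, phi y (f y).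

(** omega+1 with the order topology: Some n = n, None = omega.
    A set is open iff, whenever it contains omega, it contains a tail [N, omega). *)
Definition omega1 := option nat.

Definition omega1_open (U : omega1 -> Prop) : Prop :=
  U None -> exists N : nat, forall n, N <= n -> U (Some n).

Definition L_selective {X : Type} (openX : (X -> Prop) -> Prop) : Prop :=
  selective omega1_open openX.

(** Topological sum of countably many convergent sequences (with limits):
    the point (i, x) is x in the i-th copy of omega+1. *)
Definition sum_space := (nat * omega1)%type.

Definition sum_open (U : sum_space -> Prop) : Prop :=
  forall i : nat, omega1_open (fun x => U (i, x)).

(** The sequential fan: the quotient identifying all limit points (i, None).
    Carrier: None = the identified limit point, Some (i, n) = n-th point of
    the i-th sequence. *)
Definition fan := option (nat * nat).

Definition fan_quot (p : sum_space) : fan :=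
  match p with
  | (i, None) => None
  | (i, Some n) => Some (i, n)
  end.

Definition fan_open (U : fan -> Prop) : Prop :=
  sum_open (fun p => U (fan_quot p)).

(* Main.v *)
Require Import Defs.
From Stdlib Require Import Arith Lia Classical Cantor.

Definition phi (y : omega1) (x : fan) : Prop :=
  match y with
  | None => x = None
  | Some n => let (M, j) := Cantor.of_nat n in x = Some (0, M) \/ x = Some (S M, j)
  end.

Lemma phi_closed y : closed_in fan_open (phi y).
Proof.
  unfold closed_in, fan_open, sum_open, omega1_open; intros i H.
  destruct y as [n|]; simpl in H.
  - destruct (Cantor.of_nat n) as [M j] eqn:E.
    exists (S (M + j)); intros m Hm. simpl. rewrite E. intros [h|h]; inversion h; lia.
  - exfalso; apply H; reflexivity.
Qed.

Lemma bound_exists (U : fan -> Prop) :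
  (forall i, exists N, forall m, N <= m -> U (Some (i, m))) ->
  forall K, exists B, forall M j, M < K -> B <= Cantor.to_nat (M, j) -> U (Some (S M, j)).
Proof.
  intros HU K; induction K as [|K [B HB]].
  - exists 0; intros; lia.
  - destruct (HU (S K)) as [N HN].
    assert (HB2 : exists B2, forall j, j < N -> Cantor.to_nat (K, j) < B2).
    { clear HN; induction N as [|N [B2 HB2]].
      - exists 0; intros; lia.
      - exists (Nat.max B2 (S (Cantor.to_nat (K, N)))); intros j Hj.
        assert (j < N \/ j = N) as [h|h] by lia.
        + specialize (HB2 j h); lia.
        + subst; lia. }
    destruct HB2 as [B2 HB2].
    exists (Nat.max B B2); intros M j HM Hle.
    assert (M < K \/ M = K) as [h|h] by lia.
    + apply HB; lia.
    + subst. apply HN. destruct (le_lt_dec N j); auto.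
      specialize (HB2 j l); lia.
Qed.

Lemma phi_lsc : lsc omega1_open fan_open phi.
Proof.
  unfold lsc; intros U HU [x [Hx HUx]].
  simpl in Hx; subst x.
  unfold fan_open, sum_open, omega1_open in HU.
  assert (HU' : forall i, exists N, forall m, N <= m -> U (Some (i, m))).
  { intros i. destruct (HU i HUx) as [N HN]. exists N; intros m Hm; apply (HN m Hm). }
  destruct (HU' 0) as [N0 HN0].
  destruct (bound_exists U HU' N0) as [B HB].
  exists B; intros n Hn. simpl.
  destruct (Cantor.of_nat n) as [M j] eqn:E.
  destruct (le_lt_dec N0 M).
  - exists (Some (0, M)); split; auto.
  - exists (Some (S M, j)); split; auto.
    apply HB; auto. rewrite <- E, Cantor.cancel_to_of. exact Hn.
Qed.

Theorem mainTheorem17 : ~ L_selective fan_open.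
Proof.
  intros HL.
  destruct (HL phi) as [f [Hc Hf]].
  - intros [n|]; simpl.
    + destruct (Cantor.of_nat n) as [M j]. eauto.
    + eauto.
  - apply phi_closed.
  - apply phi_lsc.
  - assert (Hnone : f None = None) by (apply (Hf None)).
    assert (Hmem : forall M j, f (Some (Cantor.to_nat (M, j))) = Some (0, M) \/
                               f (Some (Cantor.to_nat (M, j))) = Some (S M, j)).
    { intros M j. generalize (Hf (Some (Cantor.to_nat (M, j)))). unfold phi.
      change (Cantor.to_nat (M, j)) with (Cantor.to_nat (M, j)); rewrite (Cantor.cancel_of_to (M, j)). auto. }
    pose (prop := fun M j => forall j', j <= j' -> f (Some (Cantor.to_nat (M, j'))) <> Some (0, M)).
    destruct (classic (exists M, forall J, exists j, J <= j /\ f (Some (Cantor.to_nat (M, j))) = Some (0, M)))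
      as [[M HM] | HB].
    + set (U := fun x : fan => x <> Some (0, M)).
      assert (HUo : fan_open U).
      { unfold fan_open, sum_open, omega1_open; intros i _.
        exists (S M); intros m Hm; simpl; unfold U; intro h; inversion h; lia. }
      destruct (Hc U HUo) as [N HN].
      { rewrite Hnone; unfold U; discriminate. }
      destruct (HM N) as [j [Hj Hfj]].
      apply (HN (Cantor.to_nat (M, j))).
      * pose proof (Cantor.to_nat_non_decreasing M j); lia.
      * exact Hfj.
    + assert (HP : forall M, exists J, prop M J).
      { intros M. apply NNPP; intro hn. apply HB. exists M. intro J.
        apply NNPP; intro hn2. apply hn. exists J. intros j' Hj' Heq.
        apply hn2. exists j'. auto. }
      set (U := fun x : fan => match x with
                               | None => True
                               | Some (0, _) => True
                               | Some (S M, j) => exists j0, j0 < j /\ prop M j0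
                               end).
      assert (HUo : fan_open U).
      { unfold fan_open, sum_open, omega1_open; intros [|M] _.
        - exists 0; intros; simpl; exact I.
        - destruct (HP M) as [J HJ]. exists (S J); intros m Hm; simpl.
          exists J; split; [lia | exact HJ]. }
      destruct (Hc U HUo) as [N HN].
      { rewrite Hnone; exact I. }
      assert (Hstep : forall j, prop N j -> exists j0, j0 < j /\ prop N j0).
      { intros j Hj.
        assert (HU := HN (Cantor.to_nat (N, j))).
        assert (Hge : N <= Cantor.to_nat (N, j))
          by (pose proof (Cantor.to_nat_non_decreasing N j); lia).
        specialize (HU Hge).
        destruct (Hmem N j) as [h|h].
        - exfalso; exact (Hj j (le_n j) h).
        - rewrite h in HU; simpl in HU; exact HU. }
      assert (Hall : forall k j, j < k -> ~ prop N j).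
      { induction k as [|k IH]; intros j Hj Hp; [lia|].
        destruct (Hstep j Hp) as [j0 [Hj0 Hp0]].
        apply (IH j0); [lia | exact Hp0]. }
      destruct (HP N) as [J HJ].
      exact (Hall (S J) J (le_n _) HJ).
Qed.
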